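(* Consider the generative logic with $\mu\to1$ in the setting below. Let $\Delta$ be a finite multiset of time-indexed formulas such that $E'(\Delta)=\emptyset$. Then for every $k\in\{1,\dots,K\}$, $p(D=d_k\mid\Delta)=p(D=d_k)=1/K$.
   Context: Let $\mathcal{L}$ be a propositional language and let $K,T\ge1$. There are data sequences $d_1,\dots,d_K$; repetitions are allowed, and data are identified by their index $k$. Each $d_k$ is associated with a sequence of models $m(d_k)=(m(d_k)^1,\dots,m(d_k)^T)$ of $\mathcal{L}$. The prior is $p(D=d_k)=1/K$. A time-indexed formula is written $\alpha^t$, with $\alpha\in\mathcal{L}$ and $1\le t\le T$. Write $[\![\alpha^t]\!]_k=1$ if $\alpha$ is true in $m(d_k)^t$, and $0$ otherwise. For $\mu\in(0,1)$ and a finite multiset $X$ of time-indexed formulas, define $$p(X\mid d_k,\mu)=\prod_{\alpha^t\in X}\mu^{[\![\alpha^t]\!]_k}(1-\mu)^{1-[\![\alpha^t]\!]_k}.$$ Then define $$p(D=d_k\mid\Delta)=\lim_{\mu\to1}\frac{p(\Delta\mid d_k,\mu)\,p(d_k)}{\sum_j p(\Delta\mid d_j,\mu)\,p(d_j)}.$$ An index $k$ is an evidence of $X$ if $[\![\alpha^t]\!]_k=1$ for all $\alpha^t\in X$. Let $E(X)$ be the set of such indices. $X$ is called founded if $E(X)\neq\emptyset$. Let $MFS(\Delta)$ be the set of nonempty founded sub-multisets $S\subseteq\Delta$ that have maximum cardinality among all nonempty founded sub-multisets of $\Delta$. Set $E'(\Delta)=\bigcup_{S\in MFS(\Delta)}E(S)$.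 This union is empty if $MFS(\Delta)=\emptyset$. Thus $E'(\Delta)=\emptyset$ iff no index is an evidence of any singleton of $\Delta$. *)

(* Defs.v *)
From HB Require Import structures.
From mathcomp Require Import all_boot all_order all_algebra.
From mathcomp Require Import all_classical all_reals all_analysis.
Set Implicit Arguments. Unset Strict Implicit. Unset Printing Implicit Defensive.
Import Order.TTheory GRing.Theory Num.Theory.
Local Open Scope ring_scope.

Inductive form (A : Type) : Type :=
  | FTop | FBot | FAtom of A | FNeg of form A
  | FAnd of form A & form A | FOr of form A & form A | FImp of form A & form A.
Arguments FTop {A}. Arguments FBot {A}.

Definition model (A : Type) := A -> bool.

Fixpoint eval (A : Type) (v : model A) (f : form A) : bool :=
  match f with
  | FTop => true | FBot => false | FAtom a => v a | FNeg g => ~~ eval v g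
  | FAnd g h => eval v g && eval v h | FOr g h => eval v g || eval v h
  | FImp g h => eval v g ==> eval v h
  end.

(* Time-indexed formula alpha^t, with t : 'I_T representing {1,..,T}. *)
Definition tform (A : Type) (T : nat) := (form A * 'I_T)%type.

Section Gen.
Variables (A : Type) (K T : nat) (m : 'I_K -> 'I_T -> model A).

Definition holds (k : 'I_K) (x : tform A T) : bool := eval (m k x.2) x.1.

(* A finite multiset Delta is given as a sequence; its sub-multisets are
   given by sets of positions in the sequence. *)
Variable Delta : seq (tform A T).

Definition at_pos (i : 'I_(size Delta)) : tform A T := tnth (in_tuple Delta) i.

Definition evidence (S : {set 'I_(size Delta)}) (k : 'I_K) : bool :=
  [forall i in S, holds k (at_pos i)].

Definition founded (S : {set 'I_(size Delta)}) : bool := [exists k, evidence S k].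

Definition in_MFS (S : {set 'I_(size Delta)}) : bool :=
  [&& S != finset.set0, founded S &
      [forall S' : {set 'I_(size Delta)}, (S' != finset.set0) && founded S' ==> (#|S'| <= #|S|)%N]].

Definition E' : {set 'I_K} := [set k | [exists S, in_MFS S && evidence S k]].

Variable R : realType.

Definition lik (k : 'I_K) (mu : R) : R :=
  \prod_(x <- Delta) (if holds k x then mu else 1 - mu).

Definition prior : R := (K%:R)^-1.

Definition post_mu (k : 'I_K) (mu : R) : R :=
  lik k mu * prior / \sum_(j < K) lik j mu * prior.

End Gen.

(* Main.v *)
Require Import Defs.
From HB Require Import structures.
From mathcomp Require Import all_boot all_order all_algebra.
From mathcomp Require Import all_classical all_reals all_analysis.
Import Order.TTheory GRing.Theory Num.Theory.
Import numFieldNormedType.Exports.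
Local Open Scope classical_set_scope.
Local Open Scope ring_scope.

Lemma no_hold (A : Type) (K T : nat) (m : 'I_K -> 'I_T -> model A)
  (Delta : seq (tform A T)) :
  E' m Delta = finset.set0 ->
  forall (k : 'I_K) (i : 'I_(size Delta)), ~~ holds m k (at_pos i).
Proof.
move=> HE k i; apply/negP => Hk.
pose P := fun S : {set 'I_(size Delta)} => (S != finset.set0) && founded m S.
have P0 : P (finset.set1 i).
  apply/andP; split; first by apply/set0Pn; exists i; exact: set11.
  by apply/existsP; exists k; apply/forallP => j; apply/implyP; rewrite !inE => /eqP ->.
case: (@arg_maxnP _ _ P (fun S : {set 'I_(size Delta)} => #|S|) P0) => S PS Smax.
case/andP: (PS) => SN /existsP [k' Hk'].
have : k' \in E' m Delta.
  rewrite inE; apply/existsP; exists S; rewrite Hk' andbT.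
  rewrite /in_MFS SN /=; apply/andP; split; first by apply/existsP; exists k'.
  by apply/forallP => S'; apply/implyP => HS'; apply: Smax.
by rewrite HE inE.
Qed.

Theorem theorem4 (R : realType) (A : Type) (K T : nat) (hK : (1 <= K)%N) (hT : (1 <= T)%N)
  (m : 'I_K -> 'I_T -> model A) (Delta : seq (tform A T)) :
  E' m Delta = finset.set0 ->
  forall k : 'I_K,
    (@post_mu A K T m Delta R k mu @[mu --> (1 : R)^'-] --> (prior K R : R)) /\ prior K R = (K%:R)^-1.
Proof.
move=> HE k; split; last by [].
have Hl : forall j mu, lik m Delta j mu = (1 - mu) ^+ size Delta :> R.
  move=> j mu; rewrite /lik.
  change (\prod_(x <- tval (in_tuple Delta)) (if holds m j x then mu else 1 - mu)
     = (1 - mu) ^+ size Delta).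
  rewrite big_tuple.
  rewrite (eq_bigr (fun _ => 1 - mu)); last first.
    by move=> i _; rewrite (negbTE (@no_hold A K T m Delta HE j i)).
  by rewrite prodr_const card_ord.
apply: cvg_near_cst.
near=> mu.
have mu1 : mu < 1 by near: mu; exact: nbhs_left_lt.
rewrite /post_mu (eq_bigr (fun _ => (1 - mu) ^+ size Delta * prior K R)); last first.
  by move=> j _; rewrite Hl.
rewrite Hl sumr_const card_ord /prior.
have K0 : (K%:R : R) != 0 by rewrite pnatr_eq0 -lt0n.
have u0 : (1 - mu) ^+ size Delta != 0 by rewrite expf_neq0 // subr_eq0 gt_eqF.
have gen : forall x : R, x != 0 -> x / (x *+ K) = K%:R^-1.
  by move=> x x0; rewrite -[x *+ K]mulr_natr invfM mulrA mulfV // mul1r.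
transitivity (K%:R^-1 : R).
  apply: gen. rewrite /= -/(prior K R). by rewrite mulf_neq0 // invr_eq0.
by rewrite /prior.
Unshelve. all: by end_near.
Qed.
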